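(* If $\mathsf{A}=(A_1,\dots,A_N)\in GL_2(\mathbb{R})^N$ is dominated and irreducible, then $\mathsf{A}$ is strongly irreducible.
   Context: For a finite word $\mathtt{i}=i_1\cdots i_n$, $A_{\mathtt{i}}=A_{i_1}\cdots A_{i_n}$ and $|\mathtt{i}|=n$; $\Sigma_*$ is the set of finite words. $\alpha_1\ge\alpha_2$ are singular values. Dominated: there are $C>0$, $0<\tau<1$ with $\alpha_2(A_{\mathtt{i}})\le C\tau^{|\mathtt{i}|}\alpha_1(A_{\mathtt{i}})$ for all $\mathtt{i}\in\Sigma_*$. Irreducible: no line $V$ through the origin has $A_iV=V$ for all $i$. Strongly irreducible: no finite nonempty set $\mathcal{V}$ of lines through the origin satisfies $A_i\mathcal{V}=\mathcal{V}$ for all $i$. *)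

(* Defs.v *)
From HB Require Import structures.
From mathcomp Require Import all_boot all_order all_algebra.
From mathcomp Require Import reals.
Set Implicit Arguments. Unset Strict Implicit. Unset Printing Implicit Defensive.
Import Order.TTheory GRing.Theory Num.Theory.
Local Open Scope ring_scope.

(* Matrices act on column vectors; a word i_1...i_n gives A_{i_1} *m ... *m A_{i_n}. *)
Definition word_prod (R : realType) (N : nat) (A : 'I_N -> 'M[R]_2)
  (w : seq 'I_N) : 'M[R]_2 := foldr (fun i M => A i *m M) 1%:M w.

(* Singular values of a 2x2 matrix: square roots of the two eigenvalues
   (largest first) of A^T A, whose characteristic polynomial is
   X^2 - tr(A^T A) X + det(A^T A). *)
Definition sv1 (R : realType) (A : 'M[R]_2) : R :=
  let M := A^T *m A in
  Num.sqrt ((\tr M + Num.sqrt (\tr M ^+ 2 - 4 * \det M)) / 2).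
Definition sv2 (R : realType) (A : 'M[R]_2) : R :=
  let M := A^T *m A in
  Num.sqrt ((\tr M - Num.sqrt (\tr M ^+ 2 - 4 * \det M)) / 2).

Definition dominated (R : realType) (N : nat) (A : 'I_N -> 'M[R]_2) : Prop :=
  exists C tau : R, 0 < C /\ 0 < tau < 1 /\
    forall w : seq 'I_N,
      sv2 (word_prod A w) <= C * tau ^+ size w * sv1 (word_prod A w).

(* A line through the origin of R^2 is the span of a nonzero column vector v;
   two nonzero vectors give the same line iff their spans are equal. *)
Definition same_line (R : realType) (u v : 'cV[R]_2) : bool :=
  (u^T == v^T)%MS.

Definition fixes_line (R : realType) (M : 'M[R]_2) (v : 'cV[R]_2) : bool :=
  same_line (M *m v) v.

Definition irreducible_tuple (R : realType) (N : nat) (A : 'I_N -> 'M[R]_2)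
  : Prop :=
  ~ exists v : 'cV[R]_2, v != 0 /\ forall i, fixes_line (A i) v.

(* A finite nonempty set of lines is given by a nonempty list s of nonzero
   spanning vectors; M s = s as sets of lines means: the image of every line
   of s is a line of s, and every line of s is the image of a line of s. *)
Definition invariant_lines (R : realType) (M : 'M[R]_2) (s : seq 'cV[R]_2)
  : Prop :=
  (forall u, u \in s -> exists2 v, v \in s & same_line (M *m u) v) /\
  (forall v, v \in s -> exists2 u, u \in s & same_line (M *m u) v).

Definition strongly_irreducible_tuple (R : realType) (N : nat)
  (A : 'I_N -> 'M[R]_2) : Prop :=
  ~ exists s : seq 'cV[R]_2,
      s != [::] /\ (forall v, v \in s -> v != 0) /\
      forall i, invariant_lines (A i) s.

(* Main.v *)
Require Import Defs.
From mathcomp Require Import all_boot all_order all_algebra.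
From mathcomp Require Import reals.
From mathcomp Require Import ring lra.
From Stdlib Require Import Classical.
Set Implicit Arguments. Unset Strict Implicit. Unset Printing Implicit Defensive.
Import Order.TTheory GRing.Theory Num.Theory.
Local Open Scope ring_scope.

Section S_H.
Variable R : realType.
Implicit Types x y z : 'cV[R]_2.

Lemma sl_refl x : same_line x x.
Proof. by rewrite /same_line; apply/eqmxP. Qed.

Lemma sl_sym x y : same_line x y -> same_line y x.
Proof. by rewrite /same_line => /eqmxP H; apply/eqmxP; apply: eqmx_sym. Qed.

Lemma sl_trans x y z : same_line x y -> same_line y z -> same_line x z.
Proof.
by rewrite /same_line => /eqmxP H1 /eqmxP H2; apply/eqmxP; apply: eqmx_trans H1 H2.
Qed.

Lemma sl_mul (M : 'M[R]_2) x y : same_line x y -> same_line (M *m x) (M *m y).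
Proof.
rewrite /same_line => /eqmxP H; apply/eqmxP; rewrite !trmx_mul.
exact: eqmxMr.
Qed.

Lemma sl_unmul (M : 'M[R]_2) x y : M \in unitmx ->
  same_line (M *m x) (M *m y) -> same_line x y.
Proof.
move=> HM /(sl_mul (invmx M)); by rewrite !mulmxA mulVmx // !mul1mx.
Qed.

Lemma sl_scale x (c : R) : c != 0 -> same_line x (c *: x).
Proof.
move=> Hc; rewrite /same_line; apply/eqmxP; rewrite linearZ /=.
exact: eqmx_sym (eqmx_scale _ Hc).
Qed.

Lemma sl_ex x y : same_line x y -> exists c : R, y = c *: x.
Proof.
rewrite /same_line => /andP [_ /submxP [D HD]].
exists (D 0 0); rewrite -[y]trmxK HD (mx11_scalar D) mul_scalar_mx linearZ /=.
by rewrite trmxK mxE eqxx mulr1n.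
Qed.
End S_H.


Section S_H2.
Variable R : realType.
Implicit Types x y z u w : 'cV[R]_2.

Lemma ord2 (i : 'I_2) : i = 0 \/ i = 1.
Proof. by case: i => [[|[|//]]] H; [left|right]; apply: val_inj. Qed.

Lemma cv_eq x y : x 0 0 = y 0 0 -> x 1 0 = y 1 0 -> x = y.
Proof.
move=> H0 H1; apply/matrixP => i j; rewrite (ord1 j).
by case: (ord2 i) => ->.
Qed.

Lemma mulE (M : 'M[R]_2) x i : (M *m x) i 0 = M i 0 * x 0 0 + M i 1 * x 1 0.
Proof.
rewrite mxE !big_ord_recl big_ord0 addr0.
have -> : (0 : 'I_2) = ord0 by apply: val_inj.
by have -> : (1 : 'I_2) = lift ord0 ord0 by apply: val_inj.
Qed.

Lemma eig2 (M : 'M[R]_2) u w (c : R) : u != 0 -> w != 0 -> ~~ same_line u w ->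
  M *m u = c *: u -> M *m w = c *: w -> M = c%:M.
Proof.
move=> u0 w0 nsl Hu Hw.
set d := u 0 0 * w 1 0 - u 1 0 * w 0 0.
have dn0 : d != 0.
  apply/negP => /eqP d0; move/negP: nsl; apply.
  have [Hu0|Hu0] := eqVneq (u 0 0) 0.
  - have Hu1 : u 1 0 != 0.
      apply/negP => /eqP Hu1; move/negP: u0; apply; apply/eqP.
      by apply: cv_eq; rewrite mxE.
    have Hw0 : w 0 0 = 0.
      move: d0; rewrite /d Hu0 mul0r sub0r => /eqP; rewrite oppr_eq0 mulf_eq0.
      by rewrite (negbTE Hu1) => /eqP.
    have -> : w = (w 1 0 / u 1 0) *: u.
      by apply: cv_eq; rewrite !mxE ?Hw0 ?Hu0 ?mulr0 // divfK.
    apply: sl_scale; rewrite mulf_eq0 invr_eq0 (negbTE Hu1) orbF.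
    apply/negP => /eqP Hw1; move/negP: w0; apply; apply/eqP.
    by apply: cv_eq; rewrite mxE.
  - have -> : w = (w 0 0 / u 0 0) *: u.
      apply: cv_eq; rewrite !mxE ?divfK //.
      rewrite mulrAC; apply: (mulIf Hu0); rewrite divfK //.
      apply/eqP; rewrite -subr_eq0; apply/eqP; rewrite -d0 /d; ring.
    apply: sl_scale; rewrite mulf_eq0 invr_eq0 (negbTE Hu0) orbF.
    apply/negP => /eqP Hw0; move/negP: w0; apply; apply/eqP.
    apply: cv_eq; rewrite !mxE //.
    move: d0; rewrite /d Hw0 mulr0 subr0 => /eqP; rewrite mulf_eq0 (negbTE Hu0) /=.
    by move/eqP.
have key : forall i, M i 0 = c * (i == 0)%:R /\ M i 1 = c * (i == 1)%:R.
  move=> i.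
  have E1 : M i 0 * u 0 0 + M i 1 * u 1 0 = c * u i 0.
    by rewrite -mulE Hu mxE.
  have E2 : M i 0 * w 0 0 + M i 1 * w 1 0 = c * w i 0.
    by rewrite -mulE Hw mxE.
  have F0 : (M i 0 - c * (i == 0)%:R) * d = 0.
    have : (M i 0 - c * (i == 0)%:R) * d =
      w 1 0 * (M i 0 * u 0 0 + M i 1 * u 1 0 - c * u i 0)
      - u 1 0 * (M i 0 * w 0 0 + M i 1 * w 1 0 - c * w i 0).
      by case: (ord2 i) => ->; rewrite /d /=; ring.
    by rewrite E1 E2 !subrr !mulr0 subrr.
  have F1 : (M i 1 - c * (i == 1)%:R) * d = 0.
    have : (M i 1 - c * (i == 1)%:R) * d =
      - w 0 0 * (M i 0 * u 0 0 + M i 1 * u 1 0 - c * u i 0)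
      + u 0 0 * (M i 0 * w 0 0 + M i 1 * w 1 0 - c * w i 0).
      by case: (ord2 i) => ->; rewrite /d /=; ring.
    by rewrite E1 E2 !subrr !mulr0 addr0.
  move/eqP: F0; move/eqP: F1; rewrite !mulf_eq0 (negbTE dn0) !orbF !subr_eq0.
  by move=> /eqP -> /eqP ->.
apply/matrixP => i j; rewrite !mxE.
case: (key i) => K0 K1; case: (ord2 j) => ->; [rewrite K0 | rewrite K1];
  by case: (ord2 i) => ->; rewrite /= ?mulr1 ?mulr0 ?mulr1n ?mulr0n.
Qed.
End S_H2.


Section S_H3.
Variable R : realType.

Lemma orbit_aux (M : 'M[R]_2) (s : seq 'cV[R]_2) u : M \in unitmx -> u \in s ->
  (forall x, x \in s -> exists2 y, y \in s & same_line (M *m x) y) ->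
  exists n, (0 < n)%N /\ same_line u (M ^+ n *m u).
Proof.
move=> HM us Hinv.
have H : forall k, has (same_line (M ^+ k *m u)) s.
  elim=> [|k IH].
    by apply/hasP; exists u => //; rewrite expr0 mul1mx; apply: sl_refl.
  case/hasP: IH => v vs Hv; case: (Hinv v vs) => y ys Hy.
  apply/hasP; exists y => //.
  rewrite exprS -mulmxE -mulmxA; exact: sl_trans (sl_mul M Hv) Hy.
have Hf k : (find (same_line (M ^+ k *m u)) s < size s)%N by rewrite -has_find.
pose g (k : 'I_(size s).+1) : 'I_(size s) := Ordinal (Hf k).
have [a [b [ab gab]]] : exists a b : 'I_(size s).+1, (a < b)%N /\ g a = g b.
  apply: NNPP => Hn.
  have ginj : injective g.
    move=> a b Hab; apply: val_inj; case: (ltngtP a b) => // Hlt.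
    - by exfalso; apply: Hn; exists a, b.
    - by exfalso; apply: Hn; exists b, a.
  by move: (leq_card g ginj); rewrite !card_ord ltnn.
have Ha := nth_find 0 (H a); have Hb := nth_find 0 (H b).
have {}gab : find (same_line (M ^+ a *m u)) s = find (same_line (M ^+ b *m u)) s.
  by move: (congr1 val gab).
rewrite -gab in Hb.
have Hab := sl_trans Ha (sl_sym Hb).
exists (b - a)%N; split; first by rewrite subn_gt0.
have Hu : M ^+ a \in unitmx by apply: unitrX.
apply: (sl_unmul Hu).
by rewrite mulmxA mulmxE -exprD subnKC // ltnW.
Qed.
End S_H3.


Section S_H4.
Variable R : realType.

Lemma sv_scalar (c : R) : sv2 (c%:M : 'M_2) = sv1 (c%:M : 'M_2) /\
   (c != 0 -> 0 < sv1 (c%:M : 'M_2)).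
Proof.
rewrite /sv1 /sv2 tr_scalar_mx -scalar_mxM mxtrace_scalar det_scalar.
have -> : ((c * c) *+ 2) ^+ 2 - 4 * (c * c) ^+ 2 = 0 by ring.
rewrite sqrtr0 addr0 subr0; split => // c0.
rewrite sqrtr_gt0 divr_gt0 // pmulrn_lgt0 //.
by rewrite lt0r mulf_neq0 //= -expr2 sqr_ge0.
Qed.

Lemma scalarX (c : R) k : (c%:M : 'M[R]_2) ^+ k = (c ^+ k)%:M.
Proof.
elim: k => [|k IH]; first by rewrite !expr0.
by rewrite !exprS IH -mulmxE -scalar_mxM.
Qed.

Lemma wp_nseq N (A : 'I_N -> 'M[R]_2) j m : word_prod A (nseq m j) = A j ^+ m.
Proof.
elim: m => [|m IH]; first by rewrite expr0.
by rewrite exprS -mulmxE -IH.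
Qed.

Lemma bern (h : R) k : 0 <= h -> 1 + k%:R * h <= (1 + h) ^+ k.
Proof.
move=> h0; elim: k => [|k IH]; first by rewrite expr0 mul0r addr0.
rewrite exprS; apply: le_trans (_ : (1 + h) * (1 + k%:R * h) <= _).
  have : 0 <= k%:R * h * h by rewrite mulr_ge0 // mulr_ge0.
  rewrite -natr1. lra.
by apply: ler_wpM2l => //; lra.
Qed.

Lemma small_pow (C tau : R) : 0 < C -> 0 < tau < 1 -> exists k, C * tau ^+ k < 1.
Proof.
move=> C0 /andP [t0 t1].
set h := tau^-1 - 1.
have h0 : 0 < h by rewrite /h subr_gt0 invf_gt1.
have Hb := archi_boundP (ltW (divr_gt0 C0 h0)).
set k := Num.Def.archi_bound _ in Hb.
exists k.
have Hk : C < k%:R * h by rewrite -ltr_pdivrMr.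
have Hp := bern k (ltW h0).
have -> : tau = (1 + h)^-1 by rewrite /h addrC subrK invrK.
rewrite exprVn ltr_pdivrMr ?mul1r; first lra.
apply: lt_le_trans Hp; have : 0 <= k%:R * h by rewrite mulr_ge0 // ltW.
lra.
Qed.
End S_H4.


Theorem mainTheorem10 (R : realType) (N : nat) (A : 'I_N -> 'M[R]_2) :
  (forall i, A i \in unitmx) ->
  dominated A -> irreducible_tuple A -> strongly_irreducible_tuple A.
Proof.
move=> Hunit [C [tau [C0 [ttau Hdom]]]] Hirr [s [sn0 [Hnz Hinv]]].
case: s sn0 Hnz Hinv => [//|u s'] _ Hnz Hinv.
have u0 : u != 0 by apply: Hnz; rewrite mem_head.
have [j Hj] : exists j, ~~ fixes_line (A j) u.
  apply: NNPP => Hn; apply: Hirr; exists u; split => // i.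
  by apply: NNPP => Hi; apply: Hn; exists i; apply/negP.
set M := A j in Hj.
have HM : M \in unitmx by apply: Hunit.
have [n [n0 Hn]] := orbit_aux HM (mem_head u s') (proj1 (Hinv j)).
have [c Hc] := sl_ex Hn.
have Mx0 : forall x : 'cV[R]_2, M *m x = 0 -> x = 0.
  move=> x Hx; by rewrite -(mul1mx x) -(mulVmx HM) -mulmxA Hx mulmx0.
have Mnx0 : forall x : 'cV[R]_2, M ^+ n *m x = 0 -> x = 0.
  move=> x Hx; have HMn : M ^+ n \in unitmx by apply: unitrX.
  by rewrite -(mul1mx x) -(mulVmx HMn) -mulmxA Hx mulmx0.
have w0 : M *m u != 0 by apply/negP => /eqP /Mx0 /eqP; apply/negP.
have Hsc : M ^+ n = c%:M.
  apply: (eig2 u0 w0) => //.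
    by apply/negP => /sl_sym; apply/negP.
  by rewrite mulmxA mulmxE -exprSr exprS -mulmxE -mulmxA Hc scalemxAr.
have c0 : c != 0.
  apply/negP => /eqP c0; move/negP: u0; apply; apply/eqP; apply: Mnx0.
  by rewrite Hc c0 scale0r.
have [k Hk] := small_pow C0 ttau.
have := Hdom (nseq (n * k) j).
rewrite wp_nseq size_nseq exprM -/M Hsc scalarX.
have [-> pos] := sv_scalar (c ^+ k).
have Hp := pos (expf_neq0 k c0).
set x := sv1 _ in Hp *.
have Htk : tau ^+ (n * k) <= tau ^+ k.
  case/andP: ttau => t0 t1.
  rewrite -(subnKC (_ : (k <= n * k)%N)); last by rewrite leq_pmull.
  rewrite exprD; apply: ler_piMr; first by rewrite exprn_ge0 // ltW.
  by rewrite exprn_ile1 // ltW.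
have : C * tau ^+ (n * k) < 1.
  apply: le_lt_trans Hk; by rewrite ler_pM2l.
set t := C * tau ^+ (n * k).
move=> Ht Hle; nra.
Qed.
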